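(* $\mathrm{1QFA}_{(1/2,1/2)}/Rn=\mathrm{ALL}$.
   Context: $\mathrm{ALL}$ is the collection of all languages. A 1qfa is a one-way measure-many quantum finite automaton (one unitary per scanned symbol, followed at each step by a projection measurement onto accepting/rejecting/non-halting subspaces). For equal-length strings $x,y$, $\genfrac{[}{]}{0pt}{}{x}{y}$ is the two-track string with $x$ on the upper track and $y$ on the lower track. For functions $a,b:\mathbb{N}\to[0,1]$, $\mathrm{1QFA}_{(a(n),b(n))}/Rn$ is the family of languages $L$ over $\Sigma$ for which there exist a 1qfa $M$, an advice alphabet $\Gamma$ and randomized advice $\{D_n\}_{n\in\mathbb{N}}$ ($D_n$ a probability distribution on $\Gamma^n$) such that for every $n$ and $x\in\Sigma^n$: if $x\in L$, then $M$ on $\genfrac{[}{]}{0pt}{}{x}{y}$ with $y\sim D_n$ accepts with probability more than $a(n)$; if $x\notin L$, it rejects with probability more than $b(n)$ (probabilities taken over both $M$ and $D_n$). *)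

(* Defs.v *)
From HB Require Import structures.
From mathcomp Require Import all_boot all_order all_algebra.
From mathcomp Require Import reals.
From mathcomp Require Import complex.
Set Implicit Arguments. Unset Strict Implicit. Unset Printing Implicit Defensive.
Import Order.TTheory GRing.Theory Num.Theory.
Local Open Scope ring_scope.

Inductive tape_sym (A : Type) := Cent | Dollar | Sym of A.
Arguments Cent {A}. Arguments Dollar {A}.

Definition adjmx (R : realType) m n (A : 'M[R[i]]_(m, n)) : 'M[R[i]]_(n, m) :=
  (map_mx (@conjc R) A)^T.

Definition csqnorm (R : realType) (z : R[i]) : R :=
  (complex.Re z) ^+ 2 + (complex.Im z) ^+ 2.

(* A one-way measure-many quantum finite automaton (Kondacs--Watrous) over
   input alphabet A, with complex amplitudes: state set 'I_qdim, initial state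
   qinit, accepting / rejecting states qacc / qrej (disjoint), the remaining
   states being non-halting; one unitary per tape symbol (including the
   endmarkers). *)
Record mm1qfa (R : realType) (A : Type) := MM1QFA {
  qdim : nat;
  qU : tape_sym A -> 'M[R[i]]_qdim;
  qinit : 'I_qdim;
  qacc : pred 'I_qdim;
  qrej : pred 'I_qdim;
  qU_unitary : forall s, qU s *m adjmx (qU s) = 1%:M;
  qacc_rej_disj : forall q, ~~ (qacc q && qrej q)
}.
Arguments qdim {R A} m.
Arguments qU {R A} m s.
Arguments qinit {R A} m.
Arguments qacc {R A} m _.
Arguments qrej {R A} m _.

Section Run.
Variables (R : realType) (A : Type) (M : mm1qfa R A).

Definition qnon (q : 'I_(qdim M)) : bool := ~~ qacc M q && ~~ qrej M q.

(* configuration: (unnormalised non-halting state vector,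
                   accumulated acceptance prob., accumulated rejection prob.) *)
Definition qconf := ('cV[R[i]]_(qdim M) * R * R)%type.

(* one step: apply the unitary of the scanned symbol, then measure w.r.t.
   the decomposition into accepting / rejecting / non-halting subspaces. *)
Definition qstep (c : qconf) (s : tape_sym A) : qconf :=
  let: (psi, pa, pr) := c in
  let phi := qU M s *m psi in
  (\col_q (if qnon q then phi q 0 else 0),
   pa + \sum_(q | qacc M q) csqnorm (phi q 0),
   pr + \sum_(q | qrej M q) csqnorm (phi q 0)).

Definition qinit_vec : 'cV[R[i]]_(qdim M) :=
  \col_q (if q == qinit M then 1 else 0).

Definition qrun (w : seq A) : qconf :=
  foldl qstep (qinit_vec, 0, 0) (Cent :: rcons (map (@Sym A) w) Dollar).

Definition acc_prob (w : seq A) : R := (qrun w).1.2.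
Definition rej_prob (w : seq A) : R := (qrun w).2.
End Run.

Definition two_track (S G : Type) n (x : n.-tuple S) (y : n.-tuple G)
  : seq (S * G) := zip x y.

Definition is_distr (R : realType) (T : finType) (D : {ffun T -> R}) : Prop :=
  (forall t, 0 <= D t) /\ \sum_t D t = 1.

(* L is in 1QFA_(a(n),b(n))/Rn.  Languages over Sigma are predicates on words;
   a 1qfa over the two-track alphabet Sigma * Gamma is used. *)
Definition in_1QFA_Rn (R : realType) (Sigma : finType) (a b : nat -> R)
    (L : seq Sigma -> Prop) : Prop :=
  exists (Gamma : finType) (M : mm1qfa R (Sigma * Gamma))
         (D : forall n, {ffun n.-tuple Gamma -> R}),
    (forall n, is_distr (D n)) /\
    forall n (x : n.-tuple Sigma),
      (L x -> a n < \sum_(y : n.-tuple Gamma) D n y * acc_prob M (two_track x y)) /\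
      (~ L x -> b n < \sum_(y : n.-tuple Gamma) D n y * rej_prob M (two_track x y)).

(* Main.v *)
Require Import Defs.
From HB Require Import structures.
From mathcomp Require Import all_boot all_order all_algebra.
From mathcomp Require Import reals.
From mathcomp Require Import complex.
From mathcomp Require Import fingroup perm ring lra.
From Stdlib Require Import ClassicalEpsilon.
Import Order.TTheory GRing.Theory Num.Theory.
Set Implicit Arguments. Unset Strict Implicit.
Local Open Scope ring_scope.

Section Constr.
Variables (R : realType) (Sigma : finType) (L : seq Sigma -> Prop).

Definition Gam := (option Sigma * bool * option bool)%type.

Definition bL (z : seq (option Sigma)) : bool :=
  if excluded_middle_informative (exists x, map Some x = z /\ L x) then true else false.

Lemma bL_some (x : seq Sigma) : bL (map Some x) = true <-> L x.
Proof.
rewrite /bL; case: excluded_middle_informative => [[x' [e Lx']]|H]; split => //.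
- by move=> _; have <- : x' = x by apply: (inj_map (@Some_inj _)).
- by move=> Lx; exfalso; apply: H; exists x.
Qed.

Definition kind (s : tape_sym (Sigma * Gam)) : option bool :=
  match s with
  | Cent => None
  | Dollar => Some (bL [::])
  | Defs.Sym (a, (z, c, l)) => if Some a == z then l else Some c
  end.

Definition q0 : 'I_3 := @Ordinal 3 0 isT.
Definition q1 : 'I_3 := @Ordinal 3 1 isT.
Definition q2 : 'I_3 := @Ordinal 3 2 isT.

Lemma ord3 (i : 'I_3) : [\/ i = q0, i = q1 | i = q2].
Proof.
case: i => [[|[|[|i]]] Hi].
- by constructor 1; apply: val_inj.
- by constructor 2; apply: val_inj.
- by constructor 3; apply: val_inj.
- by [].
Qed.

Definition sig (k : option bool) : {perm 'I_3} :=
  match k with None => 1%g | Some true => tperm q0 q1 | Some false => tperm q0 q2 end.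

Definition pmx (s : {perm 'I_3}) : 'M[R[i]]_3 := \matrix_(i, j) ((s i == j)%:R).

Lemma sum_pick (T : finType) (e : T) (h : T -> R[i]) :
  \sum_y (e == y)%:R * h y = h e.
Proof.
rewrite (bigD1 e) //= eqxx mul1r big1 ?addr0 // => y ye.
by rewrite eq_sym (negbTE ye) mul0r.
Qed.

Lemma pmx_unitary s : pmx s *m adjmx (pmx s) = 1%:M.
Proof.
apply/matrixP => i j; rewrite !mxE /adjmx.
under eq_bigr => k _ do rewrite !mxE rmorph_nat.
rewrite sum_pick (inj_eq perm_inj) eq_sym.
by case: (j == i).
Qed.

Definition qA : pred 'I_3 := fun q => q == q1.
Definition qR : pred 'I_3 := fun q => q == q2.

Lemma disjAR q : ~~ (qA q && qR q).
Proof. by rewrite /qA /qR; case: eqP => // ->. Qed.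

Definition M : mm1qfa R (Sigma * Gam) :=
  @MM1QFA R _ 3 (fun s => pmx (sig (kind s))) q0 qA qR
    (fun s => pmx_unitary _) disjAR.


Definition live : qconf M := (qinit_vec M, 0, 0).
Definition done (b : bool) : qconf M := (0, b%:R, (~~ b)%:R).

Lemma csq_nat (b : bool) : csqnorm (b%:R : R[i]) = b%:R.
Proof. by case: b; rewrite /csqnorm /= ?expr0n ?expr1n ?addr0. Qed.

Lemma step_done b s : qstep (done b) s = done b.
Proof.
rewrite /qstep /done mulmx0; congr (_, _, _).
  by apply/matrixP => i j; rewrite !mxE; case: qnon.
  by rewrite big1 ?addr0 // => q _; rewrite mxE /csqnorm /= expr0n addr0.
by rewrite big1 ?addr0 // => q _; rewrite mxE /csqnorm /= expr0n addr0.
Qed.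

Lemma step_live s : qstep live s =
  if kind s is Some b then done b else live.
Proof.
rewrite /qstep /live /=.
have phiE : forall q, (pmx (sig (kind s)) *m qinit_vec M) q 0 =
    ((sig (kind s) q == q0)%:R).
  move=> q; rewrite mxE.
  under eq_bigr => k _ do rewrite !mxE.
  change (qinit M) with q0.
  rewrite (bigD1 q0) //= mulr1 big1 ?addr0 // => k kn.
  by rewrite (negbTE kn) mulr0.
rewrite (big_pred1 q1) // (big_pred1 q2) // !phiE !csq_nat.
under eq_mx => q j do rewrite phiE.
have ne01 : (q1 == q0) = false by [].
have ne02 : (q2 == q0) = false by [].
have ne12 : (q1 == q2) = false by [].
rewrite /done /live; case: (kind s) => [[]|] /=; rewrite !add0r.
- rewrite tpermR tpermD ?ne02 //; congr (_, _, _).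
  apply/matrixP => i j; rewrite !mxE /qnon /qA /qR.
  by case: (ord3 i) => ->; rewrite ?tpermL ?tpermR ?eqxx ?ne01 ?ne02 ?ne12.
- rewrite tpermR tpermD ?ne01 //; congr (_, _, _).
  apply/matrixP => i j; rewrite !mxE /qnon /qA /qR.
  by case: (ord3 i) => ->; rewrite ?tpermL ?tpermR ?eqxx ?ne01 ?ne02 ?ne12.
- rewrite !perm1 ne01 ne02; congr (_, _, _).
  apply/matrixP => i j; rewrite !mxE /qnon /qA /qR.
  by case: (ord3 i) => ->; rewrite ?perm1 ?eqxx ?ne01 ?ne02 ?ne12.
Qed.

Definition firstk (ss : seq (tape_sym (Sigma * Gam))) : option bool :=
  foldr (fun s acc => if kind s is Some b then Some b else acc) None ss.

Lemma fold_done b ss : foldl (@qstep R _ M) (done b) ss = done b.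
Proof.
elim: ss => // s ss IH.
by rewrite (_ : foldl _ (done b) (s :: ss) = foldl (@qstep R _ M) (qstep (done b) s) ss) // step_done.
Qed.

Lemma fold_live ss : foldl (@qstep R _ M) live ss =
  if firstk ss is Some b then done b else live.
Proof.
elim: ss => // s ss IH.
rewrite (_ : foldl _ live (s :: ss) = foldl (@qstep R _ M) (qstep live s) ss) // step_live [firstk _]/=.
by case: (kind s) => [b|] //; rewrite fold_done.
Qed.

Lemma firstk_rcons l s : firstk (rcons l s) =
  if firstk l is Some b then Some b else kind s.
Proof. by elim: l => [|s' l IH] /=; [case: (kind s) | rewrite IH; case: (kind s')]. Qed.

Definition outcome (w : seq (Sigma * Gam)) : bool :=
  odflt (bL [::]) (firstk (map (@Defs.Sym _) w)).

Lemma qrun_outcome w : qrun M w = done (outcome w).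
Proof.
rewrite /qrun -/live fold_live /= firstk_rcons /outcome.
by case: (firstk _).
Qed.

Lemma acc_outcome w : acc_prob M w = (outcome w)%:R.
Proof. by rewrite /acc_prob qrun_outcome. Qed.

Lemma rej_outcome w : rej_prob M w = (~~ outcome w)%:R.
Proof. by rewrite /rej_prob qrun_outcome. Qed.

Fixpoint encl (b c : bool) (zs : seq (option Sigma)) : seq Gam :=
  match zs with
  | [::] => [::]
  | z :: zs' => (z, c, if zs' is [::] then Some b else None) :: encl b c zs'
  end.

Lemma size_encl b c zs : size (encl b c zs) = size zs.
Proof. by elim: zs => //= z zs ->. Qed.

Lemma outcome_cons p w : outcome (p :: w) =
  if kind (Defs.Sym p) is Some b then b else outcome w.
Proof. by case: p => a [[z c] l]; rewrite /outcome /=; case: ifP => //; case: l. Qed.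

Lemma outcome_enc b c xs zs : size xs = size zs ->
  outcome (zip xs (encl b c zs)) =
  if zs is [::] then bL [::] else if map Some xs == zs then b else c.
Proof.
elim: xs zs => [|x xs IH] [|z zs] //= [] Hs.
rewrite outcome_cons /= eqseq_cons.
case: (Some x =P z) => [_|ne] //=.
case: zs Hs IH => [|z' zs] Hs IH.
  by case: xs {IH} Hs.
by rewrite IH.
Qed.

Lemma outcome_enc' c xs zs : size xs = size zs ->
  outcome (zip xs (encl (bL zs) c zs)) =
  if map Some xs == zs then bL zs else c.
Proof.
move=> Hs; rewrite outcome_enc //.
by case: zs Hs => [|z zs] //; case: xs.
Qed.

Definition enc n (c : bool) (z : n.-tuple (option Sigma)) : n.-tuple Gam :=
  @Tuple n _ (encl (bL z) c z) (introT eqP (etrans (size_encl _ _ _) (size_tuple z))).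

Definition Nn n : R := #|{: n.-tuple (option Sigma)}|%:R.

Lemma Nn_gt0 n : 0 < Nn n.
Proof.
rewrite /Nn ltr0n; apply/card_gt0P; by exists (nseq_tuple n None).
Qed.

Definition D n : {ffun n.-tuple Gam -> R} :=
  [ffun y => \sum_(z : n.-tuple (option Sigma)) \sum_(c : bool)
     (enc c z == y)%:R * (2 * Nn n)^-1].

Lemma sum_pickR (T : finType) (e : T) (h : T -> R) :
  \sum_y (e == y)%:R * h y = h e.
Proof.
rewrite (bigD1 e) //= eqxx mul1r big1 ?addr0 // => y ye.
by rewrite eq_sym (negbTE ye) mul0r.
Qed.

Lemma sum_D n (g : n.-tuple Gam -> R) :
  \sum_y D n y * g y =
  \sum_(z : n.-tuple (option Sigma)) \sum_(c : bool) (2 * Nn n)^-1 * g (enc c z).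
Proof.
rewrite (eq_bigr (fun y => \sum_(z : n.-tuple (option Sigma)) \sum_(c : bool)
    (enc c z == y)%:R * ((2 * Nn n)^-1 * g y))); last first.
  move=> y _; rewrite ffunE big_distrl; apply: eq_bigr => z _.
  by rewrite big_distrl; apply: eq_bigr => c _; rewrite mulrA.
rewrite exchange_big; apply: eq_bigr => z _.
by rewrite exchange_big; apply: eq_bigr => c _; rewrite sum_pickR.
Qed.

Lemma D_distr n : is_distr (D n).
Proof.
split.
  move=> y; rewrite ffunE; apply: sumr_ge0 => z _; apply: sumr_ge0 => c _.
  by rewrite mulr_ge0 // invr_ge0 mulr_ge0 // ltW // Nn_gt0.
rewrite (eq_bigr (fun y => D n y * 1)); last by move=> y _; rewrite mulr1.
rewrite sum_D.
under eq_bigr => z _ do rewrite big_bool /= mulr1.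
rewrite sumr_const.
rewrite -[_ *+ #|_|]mulr_natr (_ : #|_|%:R = Nn n) //.
have := Nn_gt0 n; move: (Nn n) => N HN.
by field; rewrite gt_eqF.
Qed.

Lemma sum_main n (h : n.-tuple (option Sigma) -> bool -> R) zx :
  (forall z, \sum_(c : bool) h z c = 1 + (zx == z)%:R) ->
  2^-1 < \sum_(z : n.-tuple (option Sigma)) \sum_(c : bool) (2 * Nn n)^-1 * h z c.
Proof.
move=> Hh.
under eq_bigr => z _ do rewrite -mulr_sumr Hh.
rewrite -mulr_sumr big_split /= sumr_const.
rewrite -[_ *+ #|_|]mulr_natr (_ : #|_|%:R = Nn n) // mul1r.
under eq_bigr => z _ do rewrite -[(zx == z)%:R]mulr1.
rewrite sum_pickR.
have := Nn_gt0 n; move: (Nn n) => N HN.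
have -> : (2 * N)^-1 * (N + 1) = 2^-1 + (2 * N)^-1 by field; rewrite gt_eqF.
by rewrite ltrDl invr_gt0 mulr_gt0.
Qed.

End Constr.

Theorem lemma5p1 (R : realType) (Sigma : finType) (L : seq Sigma -> Prop) :
  in_1QFA_Rn (fun _ => 2^-1 : R) (fun _ => 2^-1 : R) L.
Proof.
exists (Gam Sigma), (M R L), (D R L); split; first exact: D_distr.
move=> n x; split => HL.
- rewrite sum_D; apply: (sum_main (zx := map_tuple Some x)) => z.
  rewrite big_bool /= !acc_outcome /two_track /= !outcome_enc' ?size_tuple //.
  case: (map_tuple Some x =P z) => [<-|ne] /=.
    by rewrite eqxx (proj2 (bL_some _ _) HL).
  have -> : (map Some x == z) = false by apply/eqP => e; apply: ne; apply: val_inj.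
  by rewrite /= !addr0.
- rewrite sum_D; apply: (sum_main (zx := map_tuple Some x)) => z.
  rewrite big_bool /= !rej_outcome /two_track /= !outcome_enc' ?size_tuple //.
  case: (map_tuple Some x =P z) => [<-|ne] /=.
    have -> : bL L (map Some x) = false.
      by case E: bL => //; exfalso; apply: HL; apply/(bL_some L).
    by rewrite eqxx.
  have -> : (map Some x == z) = false by apply/eqP => e; apply: ne; apply: val_inj.
  by rewrite /= !addr0 add0r.
Qed.
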